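(* Let $G=H\rtimes\mathbb{Z}$ be a group with finite generating set $(X,\pi)$, where $H$ is the normal factor, and let $f\colon G\to\mathbb{Z}$ be the projection with kernel $H$. Let $\prec$ be a left-order on $G$ which is lexicographic led by $\mathbb{Z}$, i.e. whose positive cone is $f^{-1}(P_{\mathbb{Z}})\cup P_H$ for some positive cone $P_{\mathbb{Z}}$ of $\mathbb{Z}$ and some positive cone $P_H$ of $H$, and let $\mathcal{L}\subseteq X^*$ be a regular language with $\pi(\mathcal{L})$ equal to the positive cone of $\prec$. If $H$ is finitely generated, then $H$ is language-convex with respect to $\mathcal{L}$. In particular, the restriction of $\prec$ to $H$ is a regular left-order.
   Context: A finite generating set of $G$ is a finite set $X$ with a surjective monoid homomorphism $\pi\colon X^*\to G$; $\mathrm{dist}$ denotes the word metric on $G$ with respect to $X$. A positive cone of a group $K$ is a subsemigroup $P$ with $K=P\sqcup P^{-1}\sqcup\{1\}$. A subset $H\subseteq G$ is language-convex with respect to a language $\mathcal{L}\subseteq X^*$ if there is $R\ge0$ such that for every $w=x_1\cdots x_n\in\mathcal{L}$ with $\pi(w)\in H$, every prefix $w_i=x_1\cdots x_i$ satisfies $\mathrm{dist}(\pi(w_i),H)\le R$. A left-order on a finitely generated group $K$ is regular if there is a finite generating set $(Y,\pi_K)$ of $K$ and a regular language $\mathcal{M}\subseteq Y^*$ with $\pi_K(\mathcal{M})$ equal to its positive cone. *)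

(* Defs.v *)
From mathcomp Require Import all_boot all_algebra.
Set Implicit Arguments. Unset Strict Implicit. Unset Printing Implicit Defensive.
Import GRing.Theory.
Local Open Scope ring_scope.

Record group := Group {
  gcarrier :> Type;
  gmul : gcarrier -> gcarrier -> gcarrier;
  gone : gcarrier;
  ginv : gcarrier -> gcarrier;
  gmulA : forall a b c, gmul a (gmul b c) = gmul (gmul a b) c;
  gmul1g : forall a, gmul gone a = a;
  gmulg1 : forall a, gmul a gone = a;
  gmulVg : forall a, gmul (ginv a) a = gone;
  gmulgV : forall a, gmul a (ginv a) = gone }.

Section Defs.
Variable G : group.

Definition weval (X : Type) (pi : X -> G) (w : seq X) : G :=
  foldr (fun x g => gmul (pi x) g) (gone G) w.

Definition gen_set_of (K : G -> Prop) (X : finType) (pi : X -> G) : Prop :=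
  (forall x, K (pi x)) /\ (forall k, K k -> exists w : seq X, weval pi w = k).

Definition gen_set (X : finType) (pi : X -> G) : Prop := gen_set_of (fun _ => True) pi.

Definition fin_generated (K : G -> Prop) : Prop :=
  exists (X : finType) (pi : X -> G), gen_set_of K pi.

Definition dist_le (X : finType) (pi : X -> G) (g : G) (K : G -> Prop) (R : nat) : Prop :=
  exists h, K h /\ exists w : seq X, (size w <= R)%N /\ weval pi w = gmul (ginv g) h.

Definition pos_cone_in (K : G -> Prop) (P : G -> Prop) : Prop :=
  (forall g, P g -> K g) /\
  (forall a b, P a -> P b -> P (gmul a b)) /\
  (forall g, K g ->
     (P g \/ P (ginv g) \/ g = gone G) /\
     ~ (P g /\ P (ginv g)) /\ ~ (P g /\ g = gone G) /\ ~ (P (ginv g) /\ g = gone G)).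

Definition left_order (lt : G -> G -> Prop) : Prop :=
  (forall a, ~ lt a a) /\
  (forall a b c, lt a b -> lt b c -> lt a c) /\
  (forall a b, a <> b -> lt a b \/ lt b a) /\
  (forall a b c, lt a b -> lt (gmul c a) (gmul c b)).

Definition group_hom_to_int (f : G -> int) : Prop :=
  forall a b, f (gmul a b) = f a + f b.

Definition language_convex (X : finType) (pi : X -> G) (K : G -> Prop)
    (L : seq X -> Prop) : Prop :=
  exists R : nat, forall w, L w -> K (weval pi w) ->
    forall i, (i <= size w)%N -> dist_le pi (weval pi (take i w)) K R.
End Defs.

Definition pos_cone_int (P : int -> Prop) : Prop :=
  (forall a b, P a -> P b -> P (a + b)) /\
  (forall n, (P n \/ P (- n) \/ n = 0) /\
     ~ (P n /\ P (- n)) /\ ~ (P n /\ n = 0) /\ ~ (P (- n) /\ n = 0)).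

Record dfa (X : finType) := DFA {
  dstate : finType;
  dstart : dstate;
  dtrans : dstate -> X -> dstate;
  dfinal : pred dstate }.

Definition dfa_accepts (X : finType) (A : dfa X) (w : seq X) : bool :=
  @dfinal X A (foldl (@dtrans X A) (@dstart X A) w).

Definition regular (X : finType) (L : seq X -> Prop) : Prop :=
  exists A : dfa X, forall w, L w <-> dfa_accepts A w.

Definition regular_restricted_order (G : group) (K : G -> Prop) (lt : G -> G -> Prop) : Prop :=
  exists (Y : finType) (piK : Y -> G), gen_set_of K piK /\
    exists M : seq Y -> Prop, regular M /\
      forall h, (K h /\ lt (gone G) h) <-> exists w, M w /\ weval piK w = h.

(* Main.v *)
Require Import Defs.
From mathcomp Require Import all_boot all_algebra.
From mathcomp Require Import zify.
From Stdlib Require Import Classical ClassicalEpsilon.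
Set Implicit Arguments. Unset Strict Implicit. Unset Printing Implicit Defensive.
Import GRing.Theory Num.Theory.
Local Open Scope ring_scope.

Section Aux.
Variable G : group.

Lemma weval_nil (X : Type) (pi : X -> G) : weval pi [::] = gone G.
Proof. by []. Qed.
Lemma weval_cons (X : Type) (pi : X -> G) x w :
  weval pi (x :: w) = gmul (pi x) (weval pi w).
Proof. by []. Qed.
Lemma weval_cat (X : Type) (pi : X -> G) a b :
  weval pi (a ++ b) = gmul (weval pi a) (weval pi b).
Proof.
elim: a => [|x a IH]; first by rewrite cat0s weval_nil gmul1g.
by rewrite cat_cons !weval_cons IH gmulA.
Qed.

Variable f : G -> int.
Hypothesis hf : group_hom_to_int f.

Lemma f1 : f (gone G) = 0.
Proof. have := hf (gone G) (gone G); rewrite gmul1g => h; lia. Qed.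
Lemma fV a : f (ginv a) = - f a.
Proof. have := hf (ginv a) a; rewrite gmulVg f1 => h; lia. Qed.

Variable X : Type.
Variable pi : X -> G.
Definition F w := f (weval pi w).
Lemma F_nil : F [::] = 0. Proof. exact: f1. Qed.
Lemma F_cons x w : F (x :: w) = f (pi x) + F w.
Proof. by rewrite /F weval_cons hf. Qed.
Lemma F_cat a b : F (a ++ b) = F a + F b.
Proof. by rewrite /F weval_cat hf. Qed.

Lemma F_flat k w : F (flatten (nseq k w)) = k%:Z * F w.
Proof.
elim: k => [|k IH]; first by rewrite /= F_nil mul0r.
by rewrite /= F_cat IH intS mulrDl mul1r.
Qed.
Lemma size_flat k (w : seq X) : size (flatten (nseq k w)) = (k * size w)%N.
Proof. elim: k => [|k IH] //=; by rewrite size_cat IH mulSn. Qed.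
End Aux.

Lemma pigeon (S : finType) (g : nat -> S) m : (#|S| <= m)%N ->
  exists j k, (j < k <= m)%N /\ g j = g k.
Proof.
move=> hm; apply: NNPP => hno.
pose h (i : 'I_m.+1) := g i.
have inj : injective h.
  move=> i1 i2 e; apply/val_inj => /=.
  have l1 := ltn_ord i1; have l2 := ltn_ord i2.
  case: (ltngtP i1 i2) => // c.
  - exfalso; apply: hno; exists i1, i2; split => //; lia.
  - exfalso; apply: hno; exists i2, i1; split => //; lia.
have := leq_card h inj; rewrite card_ord; lia.
Qed.


Lemma pump_st (X : finType) (A : dfa X) q a b :
  foldl (@dtrans X A) q a = foldl (@dtrans X A) q (a ++ b) ->
  forall s, foldl (@dtrans X A) q (a ++ s) = foldl (@dtrans X A) q (a ++ b ++ s).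
Proof. by move=> e s; rewrite catA !(foldl_cat _ _ (_ ++ _)) -e foldl_cat. Qed.

Section Loop.
Variables (G : group) (X : finType) (pi : X -> G) (f : G -> int) (H : G -> Prop)
  (lt : G -> G -> Prop) (L : seq X -> Prop) (A : dfa X) (PZ : int -> Prop) (PH : G -> Prop).
Hypotheses (hf : group_hom_to_int f) (hH : forall g, H g <-> f g = 0)
  (hPZ : pos_cone_int PZ) (hPH : pos_cone_in H PH)
  (hlex : forall g, lt (gone G) g <-> (PZ (f g) \/ PH g))
  (hL : forall w, L w <-> dfa_accepts A w)
  (hcone : forall g, lt (gone G) g <-> exists w, L w /\ weval pi w = g).

Lemma inL_sign w : L w -> PZ (F f pi w) \/ F f pi w = 0.
Proof.
move=> Lw; have : lt (gone G) (weval pi w) by apply/hcone; exists w.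
move/hlex => [h|h]; [by left | right].
by apply/hH; apply: hPH.1.
Qed.

Lemma zero_of w1 w2 d : L w1 -> L w2 -> F f pi w1 = - d -> F f pi w2 = d -> d = 0.
Proof.
move=> L1 L2 e1 e2.
case: (inL_sign L1); rewrite e1 => h1; last by lia.
case: (inL_sign L2); rewrite e2 => h2; last by lia.
by exfalso; have [_ [hn _]] := (hPZ.2 d); apply: hn.
Qed.

Lemma shorten_loop n : forall p c, (size p <= n)%N -> L (p ++ c) -> F f pi (p ++ c) = 0 ->
  exists u, (size u < #|dstate A|)%N /\ F f pi u = F f pi p.
Proof.
elim: n => [|n IH] p c hs hLpc hF;
  (case: (ltnP (size p) #|dstate A|) => hN; first by exists p);
  have [j [k [hjk e]]] := pigeon (fun i => foldl (@dtrans X A) (@dstart X A) (take i p)) hN.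
  by lia.
set a := take j p; set b := drop j (take k p); set p2 := drop k p.
have ek : take k p = a ++ b by rewrite /a /b -(@take_takel _ j k p) ?cat_take_drop //; lia.
have hp : p = a ++ b ++ p2 by rewrite catA -ek cat_take_drop.
have hsz : size p = (j + size b + (size p - k))%N.
  have := congr1 size hp; rewrite !size_cat /a /p2 size_drop size_takel //; lia.
simpl in e; rewrite ek in e.
have pm := pump_st e.
have acc : L (p ++ c) -> L (a ++ p2 ++ c) /\ L (a ++ b ++ b ++ p2 ++ c).
  move/hL => hacc; split; apply/hL; move: hacc; rewrite /dfa_accepts hp -!catA.
    by move=> h; rewrite (pm (p2 ++ c)); exact h.
  by move=> h; rewrite -(pm (b ++ p2 ++ c)); exact h.
have [L1 L2] := acc hLpc.
have hF' : F f pi a + F f pi b + F f pi p2 + F f pi c = 0.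
  by move: hF; rewrite hp -!catA !(F_cat hf) => ?; lia.
have Fb : F f pi b = 0.
  apply: (zero_of L1 L2); rewrite !(F_cat hf); lia.
have [u [hu1 hu2]] := IH (a ++ p2) c ltac:(rewrite size_cat /a /p2 size_drop size_takel; lia)
  ltac:(by rewrite -catA) ltac:(rewrite !(F_cat hf); lia).
exists u; split => //; rewrite hu2 hp !(F_cat hf); lia.
Qed.
End Loop.


Lemma F_bound (G : group) (X : finType) (pi : X -> G) (f : G -> int) :
  group_hom_to_int f -> forall u,
  (absz (F f pi u) <= size u * \max_(x : X) absz (f (pi x)))%N.
Proof.
move=> hf; elim => [|x u IH]; first by rewrite F_nil.
rewrite (F_cons hf) /=.
have := @leq_bigmax _ (fun x => absz (f (pi x))) x => /= hx.
rewrite mulSn. lia.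
Qed.

Lemma word_for (G : group) (X : finType) (pi : X -> G) (f : G -> int) w1 w2 :
  group_hom_to_int f -> F f pi w1 = 1 -> F f pi w2 = -1 ->
  forall m, exists v, F f pi v = m /\ (size v <= absz m * (size w1 + size w2))%N.
Proof.
move=> hf h1 h2 [k|k].
  exists (flatten (nseq k w1)); rewrite (F_flat hf) size_flat h1; split; first lia.
  by rewrite leq_mul2l leq_addr orbT.
exists (flatten (nseq k.+1 w2)); rewrite (F_flat hf) size_flat h2; split; first lia.
by rewrite NegzE abszN /= leq_mul2l leq_addl orbT.
Qed.

Lemma gen_word (G : group) (X : finType) (pi : X -> G) : gen_set pi ->
  forall g, exists w, weval pi w = g.
Proof. by move=> [_ h] g; apply: h. Qed.

Lemma convex_core (G : group) (X : finType) (pi : X -> G) (f : G -> int) (H : G -> Prop)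
  (lt : G -> G -> Prop) (L : seq X -> Prop) (A : dfa X) (PZ : int -> Prop) (PH : G -> Prop) :
  gen_set pi -> group_hom_to_int f -> (forall n : int, exists g, f g = n) ->
  (forall g, H g <-> f g = 0) -> pos_cone_int PZ -> pos_cone_in H PH ->
  (forall g, lt (gone G) g <-> (PZ (f g) \/ PH g)) ->
  (forall w, L w <-> dfa_accepts A w) ->
  (forall g, lt (gone G) g <-> exists w, L w /\ weval pi w = g) ->
  exists R : nat, forall w, L w -> H (weval pi w) -> forall i, (i <= size w)%N ->
    exists v, (size v <= R)%N /\ H (gmul (weval pi (take i w)) (weval pi v)).
Proof.
move=> hgen hf hsurj hH hPZ hPH hlex hL hcone.
have [t1 ht1] := hsurj 1; have [t2 ht2] := hsurj (-1).
have [w1 hw1] := gen_word hgen t1; have [w2 hw2] := gen_word hgen t2.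
have e1 : F f pi w1 = 1 by rewrite /F hw1.
have e2 : F f pi w2 = -1 by rewrite /F hw2.
exists (#|@dstate X A| * (\max_(x : X) absz (f (pi x))) * (size w1 + size w2))%N.
move=> w Lw Hw i hi.
have hw0 : F f pi (take i w ++ drop i w) = 0 by rewrite cat_take_drop; apply/hH.
have [u [hu1 hu2]] := shorten_loop hf hH hPZ hPH hlex hL hcone (p:=take i w) (c:=drop i w) (leqnn _)
  ltac:(by rewrite cat_take_drop) hw0.
have [v [hv1 hv2]] := word_for hf e1 e2 (- F f pi (take i w)).
exists v; split; last first.
  by apply/hH; rewrite (hf _ _); move: hv1; rewrite /F => ->; rewrite addrN.
apply: (leq_trans hv2); apply: leq_mul => //.
rewrite abszN -hu2; apply: (leq_trans (F_bound pi hf u)).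
by apply: leq_mul => //; exact: ltnW.
Qed.


Definition pdec (P : Prop) : bool := if excluded_middle_informative P then true else false.
Lemma pdecT (P : Prop) : P -> pdec P = true.
Proof. by rewrite /pdec; case: excluded_middle_informative. Qed.
Lemma pdecE (P : Prop) : pdec P = true -> P.
Proof. by rewrite /pdec; case: excluded_middle_informative. Qed.

Lemma grp_L1 (G : group) (a x b c d : G) :
  gmul (gmul (ginv a) (gmul x b)) (gmul (ginv b) (gmul c d)) =
  gmul (ginv a) (gmul (gmul x c) d).
Proof.
rewrite -!gmulA; congr (gmul _ (gmul _ _)).
by rewrite (gmulA b (ginv b)) gmulgV gmul1g.
Qed.

Section Restrict.
Variables (G : group) (X : finType) (pi : X -> G) (f : G -> int) (H : G -> Prop)
  (A : dfa X) (R : nat) (Z : finType) (piZ : Z -> G).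
Hypotheses (hf : group_hom_to_int f) (hH : forall g, H g <-> f g = 0)
  (hZ : forall z, H (piZ z)).

Definition BW := (R.-bseq X).
Definition Y := (Z + (BW * X * BW))%type.
Definition gel (t1 : BW) (x : X) (t2 : BW) : G :=
  gmul (ginv (weval pi t1)) (gmul (pi x) (weval pi t2)).
Definition piK (y : Y) : G :=
  match y with
  | inl z => piZ z
  | inr (t1, x, t2) => if pdec (H (gel t1 x t2)) then gel t1 x t2 else gone G
  end.
Definition State := option (@dstate X A * BW).
Definition rtrans (s : State) (y : Y) : State :=
  match s, y with
  | Some (q, t), inr (t1, x, t2) =>
      if (val t1 == val t) && pdec (H (gel t1 x t2)) then Some (dtrans q x, t2) else None
  | _, _ => None
  end.
Definition t0 : BW := @Bseq R X [::] (leq0n R).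
Definition rfinal (s : State) : bool :=
  match s with Some (q, t) => dfinal q && (val t == [::]) | None => false end.
Definition D : dfa Y := @DFA Y State (Some (dstart A, t0)) rtrans rfinal.

Lemma rtrans_None ys : foldl rtrans None ys = None.
Proof. by elim: ys. Qed.

Lemma fw w : f (weval pi w) = F f pi w. Proof. by []. Qed.

Lemma piK_H y : H (piK y).
Proof.
case: y => [z|[[t1 x] t2]] /=; first exact: hZ.
case e: (pdec _); first exact: pdecE e.
by apply/hH; rewrite f1.
Qed.

Lemma H_word ys : H (weval piK ys).
Proof.
elim: ys => [|y ys IH]; first by apply/hH; rewrite weval_nil f1.
rewrite weval_cons; apply/hH; rewrite (hf _ _).
by move/hH: IH => ->; move/hH: (piK_H y) => ->.
Qed.

Lemma sound ys : forall q t q' t',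
  foldl rtrans (Some (q, t)) ys = Some (q', t') ->
  exists xs, q' = foldl (@dtrans X A) q xs /\
    weval piK ys = gmul (ginv (weval pi t)) (gmul (weval pi xs) (weval pi t')).
Proof.
elim: ys => [|y ys IH] q t q' t' /=.
  case=> <- <-; exists [::]; split => //.
  by rewrite weval_nil gmul1g gmulVg.
case: y => [z|[[t1 x] t2]]; first by rewrite rtrans_None.
rewrite /rtrans -/rtrans.
case e: ((val t1 == val t) && pdec (H (gel t1 x t2))); last by rewrite rtrans_None.
move/andP: e => [/eqP e1 e2] hfold.
have [xs [hq hw]] := IH _ _ _ _ hfold.
exists (x :: xs); split => //.
rewrite hw /= e2 /gel e1.
exact: grp_L1.
Qed.

Lemma rtrans_step q (t t' : BW) x : H (gel t x t') ->
  rtrans (Some (q, t)) (inr (t, x, t')) = Some (dtrans q x, t').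
Proof. by move=> h; rewrite /rtrans eqxx pdecT. Qed.

Lemma piK_step (t t' : BW) x : H (gel t x t') -> piK (inr (t, x, t')) = gel t x t'.
Proof. by move=> h; rewrite /piK pdecT. Qed.

Lemma complete s : forall p q (t : BW),
  H (gmul (weval pi p) (weval pi t)) ->
  (forall i, (0 < i <= size s)%N -> exists v, (size v <= R)%N /\
      H (gmul (weval pi (p ++ take i s)) (weval pi v))) ->
  H (weval pi (p ++ s)) ->
  (s = [::] -> val t = [::]) ->
  exists ys (t' : BW), foldl rtrans (Some (q, t)) ys = Some (foldl (@dtrans X A) q s, t') /\
    val t' = [::] /\
    weval piK ys = gmul (ginv (weval pi t)) (gmul (weval pi s) (weval pi t')).
Proof.
elim: s => [|x s IH] p q t h1 h2 h3 h4.
  exists [::], t; split => //; split; first exact: h4.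
  by rewrite /weval /= gmul1g gmulVg.
have [t' [ht'1 ht'2]] : exists t' : BW,
    H (gmul (weval pi (p ++ [:: x])) (weval pi t')) /\ (s = [::] -> val t' = [::]).
  case E: s => [|y s'].
    exists t0; split => //; apply/hH; rewrite (hf _ _) (f1 hf : f (weval pi t0) = 0) addr0.
    by apply/hH; rewrite -E.
  have [v [hv1 hv2]] := h2 1 isT.
  exists (@Bseq R X v hv1); split => //. rewrite E in hv2. exact hv2.
have hc : H (gel t x t').
  apply/hH; move/hH: h1; move/hH: ht'1.
  rewrite /gel !(hf _ _) !(fV hf) !fw !(F_cat hf) !(F_cons hf) (F_nil hf); lia.
have [ys [t'' [hfold [hval hw]]]] := IH (p ++ [:: x]) (dtrans q x) t' ht'1
  ltac:(by move=> i hi; rewrite -catA; apply: (h2 i.+1); rewrite /=; lia)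
  ltac:(by rewrite -catA) ht'2.
exists (inr (t, x, t') :: ys), t''; split; last split => //.
  by change (foldl rtrans (rtrans (Some (q, t)) (inr (t, x, t'))) ys = Some (foldl (@dtrans X A) (dtrans q x) s, t'')); rewrite rtrans_step.
change (gmul (piK (inr (t, x, t'))) (weval piK ys) = gmul (ginv (weval pi t)) (gmul (gmul (pi x) (weval pi s)) (weval pi t''))).
by rewrite hw piK_step // /gel grp_L1.
Qed.
End Restrict.


Theorem proposition4p3
  (G : group) (X : finType) (pi : X -> G) (f : G -> int) (H : G -> Prop)
  (lt : G -> G -> Prop) (L : seq X -> Prop) :
  gen_set pi ->
  group_hom_to_int f ->
  (forall n : int, exists g, f g = n) ->
  (forall g, H g <-> f g = 0) ->
  left_order lt ->
  (exists (PZ : int -> Prop) (PH : G -> Prop),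
     pos_cone_int PZ /\ pos_cone_in H PH /\
     (forall g, lt (gone G) g <-> (PZ (f g) \/ PH g))) ->
  regular L ->
  (forall g, lt (gone G) g <-> exists w, L w /\ weval pi w = g) ->
  fin_generated H ->
  language_convex pi H L /\ regular_restricted_order H lt.
Proof.
move=> hgen hf hsurj hH _ [PZ [PH [hPZ [hPH hlex]]]] [A hA] hcone [Z [piZ [hZ1 hZ2]]].
have [R hR] := convex_core hgen hf hsurj hH hPZ hPH hlex hA hcone.
split.
  exists R => w Lw Hw i hi.
  have [v [hv hHv]] := hR w Lw Hw i hi.
  exists (gmul (weval pi (take i w)) (weval pi v)); split => //.
  by exists v; split => //; rewrite gmulA gmulVg gmul1g.
exists (Y X R Z), (piK pi H (R:=R) piZ); split.
  split; first exact: (piK_H pi hf hH hZ1).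
  move=> k /hZ2 [ws hws]; exists (map inl ws); rewrite -hws.
  by elim: ws {hws} => [|z ws IH] //=; rewrite IH.
exists (dfa_accepts (D pi H A R Z)); split; first by exists (D pi H A R Z).
move=> h; split.
  move=> [Hh /hcone [w [Lw hw]]].
  have [ys [t' [hfold [hval hwv]]]] := complete (pi:=pi) (A:=A) (R:=R) piZ hf hH (s:=w) (p:=[::]) (dstart A)
    (t:=t0 X R)
    ltac:(by apply/hH; rewrite (hf _ _) (f1 hf : f (weval pi [::]) = 0) addr0; done)
    ltac:(by move=> i /andP [_ hi]; apply: hR => //; rewrite hw)
    ltac:(by rewrite cat0s hw)
    ltac:(by []).
  exists ys; split.
    by rewrite /dfa_accepts /= hfold /= hval eqxx andbT; apply/hA.
  rewrite hwv -hw.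
  have e1 : weval pi (val t') = gone G by rewrite hval.
  have e2 : ginv (gone G) = gone G by rewrite -[LHS]gmulg1 gmulVg.
  by rewrite e1 gmulg1; change (gmul (ginv (gone G)) (weval pi w) = weval pi w); rewrite e2 gmul1g.
move=> [ys [acc hys]]; split.
  by rewrite -hys; apply: (H_word pi hf hH hZ1).
move: acc; rewrite /dfa_accepts /=.
case E: (foldl _ _ ys) => [[q' t']|] //= /andP [hq /eqP ht].
have [xs [hq' hw]] := sound piZ E.
apply/hcone; exists xs; split.
  by apply/hA; rewrite /dfa_accepts -hq'.
rewrite -hys hw ht.
have e2 : ginv (gone G) = gone G by rewrite -[LHS]gmulg1 gmulVg.
by change (weval pi xs = gmul (ginv (gone G)) (gmul (weval pi xs) (gone G))); rewrite e2 gmul1g gmulg1.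
Qed.
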